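(* Let $n\ge d$, $\mathbf X\in\mathbb R^{n\times d}$ with full column rank, $1\le k<d$, and $\mathbf y\in\mathbb R^n$ with $\hat\sigma_{1:k}=\|(\mathbf I-\mathbf P_{-1:k})\mathbf y\|>0$. Let $\hat{\boldsymbol\beta}_{\mathrm{OLS}}=(\mathbf X^T\mathbf X)^{-1}\mathbf X^T\mathbf y$ and $\mathbf u=\mathbf V^T(\mathbf y-\mathbf P_{-1:k}\mathbf y)/\hat\sigma_{1:k}$. Then $$\hat{\boldsymbol\beta}_{1:k,\mathrm{OLS}}=\hat\sigma_{1:k}(\mathbf V_{1:k}^T\mathbf X_{1:k})^{-1}\mathbf u_{1:k}.$$
   Context: $\mathbf A_i$, $\mathbf A_{1:i}$, $\mathbf A_{-1:i}$ denote the $i$-th column, first $i$ columns, and submatrix with first $i$ columns removed (similarly for vector entries). $\mathbf P_{-1:i}$ is the orthogonal projection onto the column space of $\mathbf X_{-1:i}$. $\mathbf V\in\mathbb R^{n\times(n-d+k)}$ has orthonormal columns spanning the orthogonal complement of the column space of $\mathbf X_{-1:k}$, with first $k$ columns $\mathbf V_i=(\mathbf I-\mathbf P_{-1:i})\mathbf X_i/\|(\mathbf I-\mathbf P_{-1:i})\mathbf X_i\|$. *)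

(* Defs.v *)
From HB Require Import structures.
From mathcomp Require Import all_boot all_order all_algebra.
Set Implicit Arguments. Unset Strict Implicit. Unset Printing Implicit Defensive.
Import Order.TTheory GRing.Theory Num.Theory.
Local Open Scope ring_scope.

Definition vnorm (R : rcfType) (n : nat) (v : 'cV[R]_n) : R :=
  Num.sqrt ((v^T *m v) 0 0).

(* B := row_base A^T is a row-free matrix whose rows span the column space
   of A, so B *m B^T is invertible and B^T (B B^T)^-1 B is the orthogonal
   projection onto that space (A need not have full column rank). *)
Definition projmx (R : rcfType) (n r : nat) (A : 'M[R]_(n, r)) : 'M[R]_n :=
  let B := row_base A^T in (B^T *m invmx (B *m B^T)) *m B.

(* X with its first i columns (0-based indices < i) replaced by zero columns;
   it has the same column space as the submatrix X_{-1:i} of the paper. *)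
Definition dropcols (R : rcfType) (n d : nat) (X : 'M[R]_(n, d)) (i : nat)
  : 'M[R]_(n, d) :=
  \matrix_(r, j) (if (i <= j)%N then X r j else 0).

(* Main.v *)
Require Import Defs.
From HB Require Import structures.
From mathcomp Require Import all_boot all_order all_algebra.
Import Order.TTheory GRing.Theory Num.Theory.
Local Open Scope ring_scope.
Set Implicit Arguments. Unset Strict Implicit. Unset Printing Implicit Defensive.

Section Aux.
Variable R : rcfType.

Lemma mxTmx_eq0 a b (M : 'M[R]_(a, b)) : M *m M^T = 0 -> M = 0.
Proof.
move=> H; apply/matrixP => i j.
have := congr1 (fun N : 'M[R]_a => N i i) H; rewrite !mxE.
under eq_bigr do rewrite mxE.
move/psumr_eq0P => Hz.
have /eqP := Hz (fun l _ => sqr_ge0 (M i l)) j isT.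
by rewrite mulf_eq0 orbb => /eqP ->.
Qed.

Lemma unit_BBt a b (B : 'M[R]_(a, b)) : row_free B -> B *m B^T \in unitmx.
Proof.
move=> fB; rewrite -row_free_unit -kermx_eq0.
have HK := mulmx_ker (B *m B^T).
have : (kermx (B *m B^T) *m B) *m (kermx (B *m B^T) *m B)^T = 0.
  by rewrite trmx_mul !mulmxA -(mulmxA _ B) HK mul0mx.
move/mxTmx_eq0/eqP; by rewrite mulmx_free_eq0.
Qed.

Section Proj.
Variables (n r : nat) (A : 'M[R]_(n, r)).
Local Notation B := (row_base A^T).
Local Notation P := (projmx A).

Lemma BBt_unit : B *m B^T \in unitmx.
Proof. exact/unit_BBt/row_base_free. Qed.

Lemma projmxE : P = B^T *m invmx (B *m B^T) *m B.
Proof. by []. Qed.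

Lemma projmx_sym : P^T = P.
Proof.
rewrite projmxE; move: (row_base A^T) => C.
by rewrite !trmx_mul trmxK trmx_inv trmx_mul trmxK mulmxA.
Qed.

Lemma projmx_idem : P *m P = P.
Proof.
rewrite projmxE; move: BBt_unit; move: (row_base A^T) => C HC.
rewrite -!mulmxA; congr (_ *m _); rewrite !mulmxA.
by rewrite -(mulmxA _ C) mulVmx // mul1mx.
Qed.

Lemma projmx_AT : A^T *m P = A^T.
Proof.
have : (A^T <= B)%MS by rewrite eq_row_base.
case/submxP => L ->; rewrite projmxE; move: BBt_unit; move: (row_base A^T) => C HC.
by rewrite -!mulmxA; congr (L *m _); rewrite !mulmxA mulmxV // mul1mx.
Qed.

Lemma projmx_A : P *m A = A.
Proof. by apply: trmx_inj; rewrite trmx_mul projmx_sym projmx_AT. Qed.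

Lemma projmx_IA : (1%:M - P) *m A = 0.
Proof. by rewrite mulmxBl mul1mx projmx_A subrr. Qed.

Lemma projmx_ker c (v : 'M[R]_(n, c)) : A^T *m v = 0 -> P *m v = 0.
Proof.
have : (B <= A^T)%MS by rewrite eq_row_base.
case/submxP => K HK Hv.
rewrite projmxE; move: (row_base A^T) HK => C HK.
rewrite -!mulmxA; suff -> : C *m v = 0 by rewrite !mulmx0.
by rewrite HK -mulmxA Hv mulmx0.
Qed.

Lemma projmx_range c (v : 'M[R]_(n, c)) : exists z : 'M[R]_(r, c), P *m v = A *m z.
Proof.
have : (B <= A^T)%MS by rewrite eq_row_base.
case/submxP => K HK; rewrite projmxE; move: (row_base A^T) HK => C HK.
exists (K^T *m invmx (C *m C^T) *m C *m v).
by rewrite {1}HK trmx_mul trmxK !mulmxA.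
Qed.
Lemma projmx_IIdem : (1%:M - P) *m (1%:M - P) = 1%:M - P.
Proof.
by rewrite mulmxBl mulmxBr !mul1mx mulmxBr mulmx1 projmx_idem subrr subr0.
Qed.
End Proj.

Lemma dropcolsE n d (X : 'M[R]_(n, d)) i :
  dropcols X i = X *m diag_mx (\row_(j < d) (if (i <= j)%N then 1 else 0)).
Proof.
rewrite mul_mx_diag; apply/matrixP => a b; rewrite !mxE.
by case: ifP => _; rewrite ?mulr1 ?mulr0.
Qed.

Lemma dropcols_col n d (X : 'M[R]_(n, d)) i (j : 'I_d) :
  (i <= j)%N -> col j (dropcols X i) = col j X.
Proof. by move=> ij; apply/matrixP => a b; rewrite !mxE ij. Qed.

Lemma dropcols_ker n d (X : 'M[R]_(n, d)) i c (v : 'M[R]_(n, c)) :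
  X^T *m v = 0 -> (dropcols X i)^T *m v = 0.
Proof. by rewrite dropcolsE trmx_mul -mulmxA => ->; rewrite mulmx0. Qed.
End Aux.

Unset Implicit Arguments.
Theorem lemmaC5 (R : rcfType) (k m p : nat)
  (X : 'M[R]_(k + m + p, k + m)) (y : 'cV[R]_(k + m + p))
  (V : 'M[R]_(k + m + p, k + p)) :
  (1 <= k)%N -> (1 <= m)%N ->
  \rank X = (k + m)%N ->
  V^T *m V = 1%:M ->
  (forall v : 'cV[R]_(k + m + p),
      (v^T *m rsubmx X == 0) = (v^T <= V^T)%MS) ->
  (forall i0 : 'I_k,
      let w := (1%:M - projmx (dropcols X i0.+1)) *m col (lshift m i0) X in
      col (lshift p i0) V = (vnorm w)^-1 *: w) ->
  let sigma := vnorm ((1%:M - projmx (rsubmx X)) *m y) in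
  0 < sigma ->
  let beta := invmx (X^T *m X) *m X^T *m y in
  let u := sigma^-1 *: (V^T *m (y - projmx (rsubmx X) *m y)) in
  usubmx beta = sigma *: (invmx ((lsubmx V)^T *m lsubmx X) *m usubmx u).
Proof.
move=> k1 m1 rX _ _ HV sigma sig0 beta u.
have uXX : X^T *m X \in unitmx.
  have := unit_BBt (B := X^T); rewrite trmxK; apply.
  by rewrite /row_free mxrank_tr rX.
have Xinj : forall c (v : 'M[R]_(k + m, c)), X *m v = 0 -> v = 0.
  move=> c v Hv; rewrite -(mulKmx uXX v) -mulmxA Hv !mulmx0.
  by [].
set r := y - X *m beta.
have Hr : X^T *m r = 0.
  by rewrite /r mulmxBr /beta !mulmxA mulmxV // mul1mx subrr.
pose P i0 := projmx (dropcols X i0).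
have HVT : forall (i0 : 'I_k) c' (Z : 'M[R]_(k + m + p, c')),
  (col i0 (lsubmx V))^T *m Z =
  (vnorm ((1%:M - P i0.+1) *m col (lshift m i0) X))^-1 *:
    ((col (lshift m i0) X)^T *m ((1%:M - P i0.+1) *m Z)).
  move=> i0 c' Z; rewrite col_lsubmx; move: (HV i0) => /= ->.
  by rewrite linearZ /= -scalemxAl trmx_mul linearB /= trmx1 projmx_sym mulmxA.
have F1 : forall i0 : 'I_k, (1%:M - P i0.+1) *m rsubmx X = 0.
  move=> i0; have HI := projmx_IA (dropcols X i0.+1).
  have -> : rsubmx X = rsubmx (dropcols X i0.+1).
    apply/matrixP => a b; rewrite !mxE /= ifT //.
  exact: leq_trans (ltn_ord i0) (leq_addr _ _).
  by rewrite mulmx_rsub HI; apply/matrixP => a b; rewrite !mxE.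
have F2 : forall (i0 : 'I_k) (j' : 'I_(k + m)), (i0 < j')%N ->
    (1%:M - P i0.+1) *m col j' X = 0.
  move=> i0 j' ij; rewrite -(@dropcols_col _ _ _ X i0.+1 j' ij).
  by rewrite colE mulmxA projmx_IA mul0mx.
have F3 : forall i0 : 'I_k, (1%:M - P i0.+1) *m r = r.
  by move=> i0; rewrite mulmxBl mul1mx projmx_ker ?subr0 // dropcols_ker.
have F4 : forall j : 'I_(k + m), (col j X)^T *m r = 0.
  by move=> j; rewrite tr_col -row_mul Hr row0.
set V1 := lsubmx V; set X1 := lsubmx X; set X2 := rsubmx X.
have S1 : V1^T *m X2 = 0.
  apply/row_matrixP => i; rewrite row_mul row0 -tr_col HVT F1 mulmx0 scaler0.
  by [].
have S2 : V1^T *m r = 0.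
  apply/row_matrixP => i; rewrite row_mul row0 -tr_col HVT F3 F4 scaler0.
  by [].
have S3 : V1^T *m (projmx X2 *m y) = 0.
  have [z ->] := projmx_range X2 y; by rewrite mulmxA S1 mul0mx.
set C := V1^T *m X1.
have S5 : V1^T *m y = C *m usubmx beta.
  have Hy : y = X1 *m usubmx beta + X2 *m dsubmx beta + r.
    by rewrite -mul_row_col hsubmxK vsubmxK /r addrC subrK.
  clearbody r; by rewrite {1}Hy !mulmxDr S2 [V1^T *m (X2 *m _)]mulmxA S1 mul0mx !addr0 mulmxA.
have Centry : forall a b, C a b = ((col a V1)^T *m col b X1) 0 0.
  by move=> a b; rewrite !mxE; apply: eq_bigr => l _; rewrite !mxE.
have Nd : forall a : 'I_k, (1%:M - P a.+1) *m col (lshift m a) X != 0.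
  move=> a; apply/eqP => Hw0.
  have E1 : col (lshift m a) X = P a.+1 *m col (lshift m a) X.
    by move: Hw0; rewrite mulmxBl mul1mx => /eqP; rewrite subr_eq0 => /eqP.
  have [z Hz] := projmx_range (dropcols X a.+1) (col (lshift m a) X).
  move: E1; rewrite /P Hz dropcolsE -mulmxA [in X in X = _]colE => /eqP.
  rewrite -subr_eq0 -mulmxBr => /eqP /Xinj /eqP; rewrite subr_eq0 => /eqP Hd.
  have := congr1 (fun M : 'M[R]_(k + m, 1) => M (lshift m a) 0) Hd.
  rewrite mul_diag_mx !mxE eqxx /= ltnn mul0r => /eqP.
  by rewrite oner_eq0.
have S4 : C \in unitmx.
  rewrite unitmxE unitfE det_trig.
    apply/prodf_neq0 => a _; rewrite Centry HVT col_lsubmx.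
    set w := (1%:M - P a.+1) *m col (lshift m a) X.
    have Hww : (col (lshift m a) X)^T *m w = w^T *m w.
      by rewrite /w trmx_mul linearB /= trmx1 projmx_sym -mulmxA (mulmxA (1%:M - _)) projmx_IIdem.
    rewrite Hww /vnorm mxE.
    set s := (w^T *m w) 0 0.
    have s0 : 0 <= s.
      by rewrite /s mxE; apply: sumr_ge0 => l _; rewrite !mxE -expr2 sqr_ge0.
    have sn0 : s != 0.
      apply/negP => /eqP Hs; move/eqP: (Nd a); apply.
      have H0 : w^T *m w^T^T = 0.
        by rewrite trmxK [LHS]mx11_scalar -/s Hs raddf0.
      by rewrite -/w -[w]trmxK (mxTmx_eq0 H0) trmx0.
    by rewrite mulf_neq0 // invr_eq0 sqrtr_eq0 -ltNge lt0r sn0 s0.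
  apply/is_trig_mxP => a b ab.
  have Z : (col a V1)^T *m col b X1 = 0.
    by rewrite HVT col_lsubmx (F2 a (lshift m b) ab) mulmx0 scaler0.
  by rewrite Centry Z mxE.
have Hu : usubmx u = sigma^-1 *: (V1^T *m (y - projmx X2 *m y)).
  have -> : usubmx u = sigma^-1 *: usubmx (V^T *m (y - projmx X2 *m y)).
    by apply/matrixP => a b; rewrite !mxE.
  by rewrite -mul_usub_mx -trmx_lsub.
rewrite Hu mulmxBr S3 subr0 S5 -scalemxAr mulKmx // scalerA mulfV ?scale1r //.
by rewrite gt_eqF.
Qed.
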